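(* Let $\Gamma$ be a Taylor graph with vertex set $X$. For each $x\in X$, the Terwilliger algebra $T(x)$ of $\Gamma$ has dimension $\dim(T(x))=24$.
   Context: A Taylor graph is a distance-regular graph with intersection array $\{k,b,1;1,b,k\}$ where $b<k-1$; it has diameter $3$. Let $A$ be its adjacency matrix, $\partial$ its distance, and for $x\in X$ and $0\le i\le 3$ let $E^*_i(x)$ be the diagonal matrix with $(E^*_i(x))_{yy}=1$ if $\partial(x,y)=i$ and $0$ otherwise. The Terwilliger algebra $T(x)$ is the subalgebra of $\mathrm{Mat}_X(\mathbb{C})$ generated by $A,E^*_0(x),\dots,E^*_3(x)$; its dimension is as a complex vector space. *)

(* Defs.v *)
From HB Require Import structures.
From mathcomp Require Import all_boot all_order all_algebra all_field.
Set Implicit Arguments. Unset Strict Implicit. Unset Printing Implicit Defensive.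
Import Order.TTheory GRing.Theory Num.Theory.

Section Graph.
Variable T : finType.
Variable e : rel T.

Definition nbr_step (S : {set T}) : {set T} :=
  S :|: [set z | [exists y in S, e y z]].

Definition ball (k : nat) (x : T) : {set T} := iter k nbr_step [set x].

(* graph distance: least k with y in ball k x (returns #|T| if y unreachable;
   irrelevant below since the graphs considered are connected) *)
Definition gdist (x y : T) : nat := find (fun k => y \in ball k x) (iota 0 #|T|).

Definition simple_graph : Prop :=
  (forall x y, e x y = e y x) /\ (forall x, ~~ e x x).

(* distance-regular graph of diameter d with intersection array
   {b_0,...,b_{d-1}; c_1,...,c_d}, given by bs = [:: b_0; ...; b_{d-1}],
   cs = [:: c_1; ...; c_d]. *)
Definition distance_regular_array (d : nat) (bs cs : seq nat) : Prop :=
  [/\ simple_graph, size bs = d, size cs = d,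
      (forall x y, gdist x y <= d) & (exists x y, gdist x y = d)] /\
  [/\
      (forall x y, 1 <= gdist x y <= d ->
         #|[set z | e y z & gdist x z == (gdist x y).-1]| = nth 0 cs (gdist x y).-1)
    & (forall x y, (gdist x y < d)%N ->
         #|[set z | e y z & gdist x z == (gdist x y).+1]| = nth 0 bs (gdist x y))].

Definition is_taylor : Prop :=
  exists k b : nat, (b + 1 < k)%N /\
    distance_regular_array 3 [:: k; b; 1] [:: 1; b; k].

End Graph.

Local Open Scope ring_scope.

Section Terwilliger.
Variable N : nat.
Variable e : rel 'I_N.

Definition adj_mx : 'M[algC]_N := \matrix_(i, j) (e i j)%:R.

Definition dual_idem (x : 'I_N) (i : nat) : 'M[algC]_N :=
  \matrix_(y, z) ((y == z) && (gdist e x y == i))%:R.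

Definition terwilliger_gens (x : 'I_N) : seq 'M[algC]_N :=
  [:: adj_mx; dual_idem x 0; dual_idem x 1; dual_idem x 2; dual_idem x 3].
End Terwilliger.

Definition is_generated_subalgebra (n : nat) (gens : seq 'M[algC]_n)
    (V : 'A[algC]_n) : Prop :=
  [/\ (1%:M \in V)%MS,
      (forall g, g \in gens -> (g \in V)%MS),
      (V * V <= V)%MS
    & (forall W : 'A[algC]_n, (1%:M \in W)%MS ->
         (forall g, g \in gens -> (g \in W)%MS) -> (W * W <= W)%MS ->
         (V <= W)%MS)].

(* Main.v *)
Require Import Defs.
From mathcomp Require Import all_boot all_order all_algebra all_field.
From mathcomp Require Import zify ring.
Set Implicit Arguments. Unset Strict Implicit. Unset Printing Implicit Defensive.
Import Order.TTheory GRing.Theory Num.Theory.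

Section Graph.
Variable N : nat.
Variable e : rel 'I_N.
Hypothesis esym : forall y z, e y z = e z y.
Hypothesis eirr : forall y, ~~ e y y.

Local Notation d := (gdist e).

Lemma nbr_step_mono (S S' : {set 'I_N}) :
  S \subset S' -> nbr_step e S \subset nbr_step e S'.
Proof.
move=> sS; apply/subsetP => z; rewrite !inE => /orP[zS|/existsP[y /andP[yS eyz]]].
  by rewrite (subsetP sS).
by apply/orP; right; apply/existsP; exists y; rewrite (subsetP sS y yS).
Qed.

Lemma ballS m y : ball e m.+1 y = nbr_step e (ball e m y).
Proof. by []. Qed.

Lemma ball0 y : ball e 0 y = [set y].
Proof. by []. Qed.

Lemma ball_trans a c y z w :
  y \in ball e a w -> z \in ball e c y -> z \in ball e (a + c) w.
Proof.
move=> yw; elim: c z => [|c IH] z.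
  by rewrite ball0 inE addn0 => /eqP ->.
rewrite ballS addnS ballS !inE => /orP[zc|/existsP[u /andP[uc euz]]].
  by rewrite IH.
by apply/orP; right; apply/existsP; exists u; rewrite IH.
Qed.

Lemma ball_sym a y z : z \in ball e a y -> y \in ball e a z.
Proof.
elim: a z => [|a IH] z.
  by rewrite ball0 !inE => /eqP ->.
move=> H; case/setUP: H => [za|H].
  by apply/setUP; left; rewrite IH.
rewrite in_set in H; case/existsP: H => u /andP[ua euz].
have u1 : u \in ball e 1 z.
  by rewrite ballS ball0 !inE; apply/orP; right; apply/existsP; exists z; rewrite inE eqxx esym.
rewrite -add1n; exact: ball_trans u1 (IH _ ua).
Qed.

Lemma gdist_le m y z : z \in ball e m y -> (d y z <= m)%N.
Proof.
move=> h; rewrite /gdist; case: (ltnP m #|'I_N|) => hm.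
  rewrite leqNgt; apply/negP => /(before_find 0).
  by rewrite nth_iota // add0n h.
by apply: leq_trans (find_size _ _) _; rewrite size_iota.
Qed.

Lemma gdist_ball y z : (d y z < #|'I_N|)%N -> z \in ball e (d y z) y.
Proof.
move=> h; have hs : has (fun k => z \in ball e k y) (iota 0 #|'I_N|).
  by rewrite has_find size_iota.
have := nth_find 0 hs; rewrite nth_iota //.
Qed.

End Graph.

Section Taylor.
Variable N : nat.
Variable e : rel 'I_N.
Variables k b : nat.
Hypothesis Hkb : (b + 1 < k)%N.
Hypothesis esym : forall y z, e y z = e z y.
Hypothesis eirr : forall y, ~~ e y y.
Local Notation d := (gdist e).
Hypothesis Hle3 : forall y z, (d y z <= 3)%N.
Hypothesis Hex : exists x0 y0, d x0 y0 = 3.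
Hypothesis Hc : forall y z, (1 <= d y z <= 3)%N ->
  #|[set w | e z w & d y w == (d y z).-1]| = nth 0 [:: 1; b; k] (d y z).-1.
Hypothesis Hb : forall y z, (d y z < 3)%N ->
  #|[set w | e z w & d y w == (d y z).+1]| = nth 0 [:: k; b; 1] (d y z).

Lemma d_refl y : d y y = 0.
Proof. by apply/eqP; rewrite -leqn0; apply: gdist_le; rewrite ball0 inE. Qed.

Lemma cardT4 : (3 < #|'I_N|)%N.
Proof.
case: Hex => x0 [y0 h3].
have := @Hb x0 x0; rewrite d_refl /= => /(_ isT) hk.
set S := [set w | e x0 w & d x0 w == 1] in hk.
have nx : x0 \notin S by rewrite inE (negbTE (eirr x0)).
have ny : y0 \notin S by rewrite inE h3 andbF.
have nxy : x0 != y0 by apply/eqP => exy; move: h3; rewrite -exy d_refl.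
have := max_card (x0 |: (y0 |: S)).
rewrite cardsU1 cardsU1 hk (negbTE ny) in_setU1 negb_or nxy (negbTE nx) /=.
lia.
Qed.

Lemma dball y z : z \in ball e (d y z) y.
Proof. apply: gdist_ball; have := Hle3 y z; have := cardT4; lia. Qed.

Lemma d_eq0 y z : (d y z == 0) = (y == z).
Proof.
apply/eqP/eqP => [h|<-]; last exact: d_refl.
by have := dball y z; rewrite h ball0 inE => /eqP ->.
Qed.

Lemma d_sym y z : d y z = d z y.
Proof.
by apply/eqP; rewrite eqn_leq !gdist_le // ball_sym // dball.
Qed.

Lemma d_tri y z w : (d y w <= d y z + d z w)%N.
Proof. by apply: gdist_le; apply: ball_trans (dball y z) (dball z w). Qed.

Lemma d1 y z : (d y z == 1) = e y z.
Proof.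
apply/idP/idP => [/eqP h|h].
  have := dball y z; rewrite h ballS ball0 !inE => /orP[/eqP ez|].
    by move: h; rewrite ez d_refl.
  by case/existsP => u; rewrite inE => /andP[/eqP ->].
have ne : y != z by apply/eqP => ez; move: (eirr y); rewrite {2}ez h.
rewrite eqn_leq; apply/andP; split.
  apply: gdist_le; rewrite ballS ball0 !inE; apply/orP; right.
  by apply/existsP; exists y; rewrite inE eqxx.
by rewrite lt0n d_eq0.
Qed.

Lemma dpred y z m : d y z = m.+1 -> exists w, e w z /\ d y w = m.
Proof.
move=> h; have := dball y z; rewrite h => /setUP[zm|].
  by have := gdist_le zm; rewrite h ltnn.
rewrite in_set => /existsP[u /andP[um euz]]; exists u; split => //.
have := gdist_le um; have := d_tri y u z; rewrite h.
move: euz; rewrite -d1 => /eqP ->; lia.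
Qed.


Definition bn g := nth 0 [:: k; b; 1] g.
Definition cn g := if g is g'.+1 then nth 0 [:: 1; b; k] g' else 0.
Definition cntf g h :=
  if h == g.+1 then bn g else if h.+1 == g then cn g
  else if h == g then (k - cn g - bn g)%N else 0.

Lemma deg z : #|[set w | e z w]| = k.
Proof.
have := @Hb z z; rewrite d_refl => /(_ isT) /= <-.
by apply: eq_card => w; rewrite !inE d_sym d1 esym andbb.
Qed.

Lemma nbr_range y z w : e z w -> (d y z <= d y w + 1)%N && (d y w <= d y z + 1)%N.
Proof.
rewrite -d1 => /eqP h; have := d_tri y z w; have := d_tri y w z.
rewrite h (d_sym w z) h => h1 h2; apply/andP; split; lia.
Qed.

Lemma cnt_up y z : #|[set w | e z w & d y w == (d y z).+1]| = bn (d y z).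
Proof.
have := Hle3 y z; rewrite leq_eqVlt => /orP[/eqP h3|]; last by rewrite ltnS => /Hb.
rewrite h3; apply: eq_card0 => w; rewrite !inE.
by have := Hle3 y w; case: (d y w) => [|[|[|[|[|]]]]]; rewrite ?andbF.
Qed.

Lemma cnt_dn y z : (1 <= d y z)%N ->
  #|[set w | e z w & d y w == (d y z).-1]| = cn (d y z).
Proof.
move=> h; rewrite Hc; last by rewrite h Hle3.
by case: (d y z) h.
Qed.

Lemma cnt_all y z h : #|[set w | e z w & d y w == h]| = cntf (d y z) h.
Proof.
rewrite /cntf; case: eqP => [->|hu]; first exact: cnt_up.
case: eqP => [hd|hd].
  have -> : h = (d y z).-1 by rewrite -hd.
  by apply: cnt_dn; rewrite -hd.
case: eqP => [->|hs]; last first.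
  apply: eq_card0 => w; rewrite !inE; apply/negP => /andP[/(nbr_range y) hr /eqP hw].
  move: hr; rewrite hw => /andP[h1 h2].
  have : h = (d y z).+1 \/ h.+1 = d y z \/ h = d y z by lia.
  by case=> [//|[//|//]].
have [h0|hpos] := posnP (d y z).
  rewrite h0 /bn /= subn0 subnn; move: h0 => /eqP; rewrite d_eq0 => /eqP <-.
  apply: eq_card0 => w; rewrite !inE d_eq0; apply/negP => /andP[ew /eqP ezw].
  by move: ew; rewrite ezw (negbTE (eirr w)).
have hk := deg z.
rewrite -(cardsID [set w | d y w == (d y z).-1]) in hk.
have E0 : [set w | e z w] :&: [set w | d y w == (d y z).-1] =
          [set w | e z w & d y w == (d y z).-1].
  by apply/setP => w; rewrite !inE.
rewrite E0 cnt_dn // in hk.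
rewrite -(cardsID [set w | d y w == (d y z).+1]) in hk.
have E1 : ([set w | e z w] :\: [set w | d y w == (d y z).-1]) :&: [set w | d y w == (d y z).+1] =
          [set w | e z w & d y w == (d y z).+1].
  apply/setP => w; rewrite !inE; case ew: (e z w); rewrite /= ?andbF //.
  have := nbr_range y ew.
  case: (d y w =P (d y z).-1); case: (d y w =P (d y z).+1); move=> *; rewrite /=;
    by [] || (exfalso; lia).
have E2 : ([set w | e z w] :\: [set w | d y w == (d y z).-1]) :\: [set w | d y w == (d y z).+1] =
          [set w | e z w & d y w == d y z].
  apply/setP => w; rewrite !inE; case ew: (e z w); rewrite /= ?andbF //.
  have := nbr_range y ew.
  case: (d y w =P (d y z).-1); case: (d y w =P (d y z).+1); case: (d y w =P (d y z));
    move=> *; rewrite /=; by [] || (exfalso; lia).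
rewrite E1 E2 cnt_up in hk; lia.
Qed.


Local Open Scope ring_scope.

Lemma sum_bool (P : pred 'I_N) : \sum_w ((P w)%:R : algC) = (#|[set w | P w]|)%:R.
Proof.
rewrite (eq_bigr (fun w => if P w then 1 else 0)); last by move=> w _; case: (P w).
by rewrite -big_mkcond /= sumr_const cardsE.
Qed.

Definition Ah (h : nat) : 'M[algC]_N := \matrix_(y, z) ((d y z == h)%:R).
Definition J : 'M[algC]_N := const_mx 1.
Definition kk : algC := k%:R.
Definition bb : algC := b%:R.
Definition aa : algC := (k - b - 1)%N%:R.

Lemma kkE : kk = aa + bb + 1.
Proof. by rewrite /kk /aa /bb -natrD natr1; apply/eqP; rewrite eqr_nat; apply/eqP; lia. Qed.

Lemma b_pos : (0 < b)%N.
Proof.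
case: Hex => x0 [y0 /dpred [w [_ hw]]].
have := @Hc x0 w; rewrite hw /= => /(_ isT) <-.
case/dpred: hw => u [euw hu].
by apply/card_gt0P; exists u; rewrite inE esym euw hu.
Qed.

Lemma bb_neq0 : bb != 0.
Proof. by rewrite /bb pnatr_eq0 -lt0n b_pos. Qed.

Lemma kk_neq0 : kk != 0.
Proof. rewrite /kk pnatr_eq0 -lt0n; lia. Qed.


Lemma A1 : adj_mx e = Ah 1.
Proof. by apply/matrixP => y z; rewrite !mxE d1. Qed.

Lemma Ah0 : Ah 0 = 1%:M.
Proof. by apply/matrixP => y z; rewrite !mxE d_eq0. Qed.

Lemma AAh h : Ah 1 *m Ah h = \matrix_(y, z) ((cntf (d y z) h)%:R).
Proof.
apply/matrixP => y z; rewrite !mxE.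
under eq_bigr do rewrite !mxE -natrM mulnb d1 (d_sym _ z).
by rewrite sum_bool cnt_all d_sym.
Qed.

Lemma R1 : Ah 1 *m Ah 1 = kk *: Ah 0 + aa *: Ah 1 + bb *: Ah 2.
Proof.
rewrite AAh; apply/matrixP => y z; rewrite !mxE.
have := Hle3 y z; case: (d y z) => [|[|[|[|g]]]] // _; rewrite /cntf /bn /cn /= /kk /aa /bb.
all: rewrite ?mulr1 ?mulr0 ?addr0 ?add0r //; congr (_%:R); lia.
Qed.


Lemma R2 : Ah 1 *m Ah 2 = bb *: Ah 1 + aa *: Ah 2 + kk *: Ah 3.
Proof.
rewrite AAh; apply/matrixP => y z; rewrite !mxE.
have := Hle3 y z; case: (d y z) => [|[|[|[|g]]]] // _; rewrite /cntf /bn /cn /= /kk /aa /bb.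
all: rewrite ?mulr1 ?mulr0 ?addr0 ?add0r //; congr (_%:R); lia.
Qed.

Lemma R3 : Ah 1 *m Ah 3 = Ah 2.
Proof.
rewrite AAh; apply/matrixP => y z; rewrite !mxE.
have := Hle3 y z; case: (d y z) => [|[|[|[|g]]]] // _; rewrite /cntf /bn /cn /=.
by rewrite subnn.
Qed.

Lemma AJ : Ah 1 *m J = kk *: J.
Proof.
apply/matrixP => y z; rewrite !mxE.
under eq_bigr do rewrite !mxE mulr1 d1.
by rewrite sum_bool deg mulr1.
Qed.

Lemma Ah2J : Ah 2 *m J = kk *: J.
Proof.
have e1 : Ah 1 *m (Ah 1 *m J) = (kk * kk) *: J by rewrite AJ -scalemxAr AJ scalerA.
have e2 : (Ah 1 *m Ah 1) *m J = (kk + aa * kk) *: J + bb *: (Ah 2 *m J).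
  by rewrite R1 !mulmxDl -!scalemxAl Ah0 mul1mx AJ scalerA scalerDl.
rewrite mulmxA e2 in e1.
apply: (can_inj (scalerK bb_neq0)).
apply: (addrI ((kk + aa * kk) *: J)); rewrite e1 scalerA -scalerDl.
by congr (_ *: J); rewrite kkE; ring.
Qed.


Lemma Ah3J : Ah 3 *m J = J.
Proof.
have e1 : Ah 1 *m (Ah 2 *m J) = (kk * kk) *: J by rewrite Ah2J -scalemxAr AJ scalerA.
have e2 : (Ah 1 *m Ah 2) *m J = (bb * kk + aa * kk) *: J + kk *: (Ah 3 *m J).
  by rewrite R2 !mulmxDl -!scalemxAl AJ Ah2J !scalerA scalerDl.
rewrite mulmxA e2 in e1.
apply: (can_inj (scalerK kk_neq0)).
apply: (addrI ((bb * kk + aa * kk) *: J)); rewrite e1 -scalerDl.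
by congr (_ *: J); rewrite {1}kkE; ring.
Qed.

Lemma boolR_inj (a c : bool) : (a%:R : algC) = c%:R -> a = c.
Proof. by move/eqP; rewrite eqr_nat; case: a; case: c. Qed.

Lemma card3 y : #|[set w | d y w == 3%N]| = 1%N.
Proof.
move/matrixP: Ah3J => /(_ y y); rewrite !mxE.
under eq_bigr do rewrite !mxE mulr1.
by rewrite sum_bool => /eqP; rewrite pnatr_eq1 => /eqP.
Qed.

Definition sig y := odflt y [pick w | d y w == 3%N].

Lemma sig_uniq y w : d y w = 3%N -> w = sig y.
Proof.
move=> h; have /eqP/cards1P [a ha] := card3 y.
have wa : w \in [set a] by rewrite -ha inE h.
rewrite /sig; case: pickP => [v hv|/(_ w)]; last by rewrite h.
have : v \in [set a] by rewrite -ha inE hv.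
by rewrite !inE in wa * => /eqP -> ; move/eqP: wa.
Qed.

Lemma sigP y : d y (sig y) = 3%N.
Proof.
rewrite /sig; case: pickP => [v /eqP //|h].
have /eqP/cards1P [a ha] := card3 y.
have : a \in [set a] by rewrite inE.
by rewrite -ha inE h.
Qed.

Lemma sigK y : sig (sig y) = y.
Proof. symmetry; apply: sig_uniq; by rewrite d_sym sigP. Qed.

Lemma sig_eq y w : (d y w == 3%N) = (w == sig y).
Proof.
apply/eqP/eqP => [/sig_uniq //|->]; exact: sigP.
Qed.

Lemma mulP (X : 'M[algC]_N) : X *m Ah 3 = \matrix_(y, z) X y (sig z).
Proof.
apply/matrixP => y z; rewrite !mxE.
rewrite (bigD1 (sig z)) //= big1 ?addr0.
  by rewrite mxE d_sym sigP eqxx mulr1.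
by move=> w hw; rewrite mxE d_sym sig_eq (negbTE hw) mulr0.
Qed.

Lemma Pmul (X : 'M[algC]_N) : Ah 3 *m X = \matrix_(y, z) X (sig y) z.
Proof.
apply/matrixP => y z; rewrite !mxE.
rewrite (bigD1 (sig y)) //= big1 ?addr0.
  by rewrite mxE sigP eqxx mul1r.
by move=> w hw; rewrite mxE sig_eq (negbTE hw) mul0r.
Qed.

Lemma PP : Ah 3 *m Ah 3 = 1%:M.
Proof.
apply/matrixP => y z; rewrite Pmul !mxE sig_eq sigK eq_sym.
by [].
Qed.

Lemma dsig_aux i j : Ah i *m Ah 3 = Ah j -> forall y z, (d y (sig z) == i) = (d y z == j).
Proof.
move=> h y z; move/matrixP: h => /(_ y z); rewrite mulP !mxE; exact: boolR_inj.
Qed.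

Lemma dsig y z : d y (sig z) = (3 - d y z)%N.
Proof.
have h0 := dsig_aux (i := 0) (j := 3) ltac:(by rewrite Ah0 mul1mx) y z.
have h1 := dsig_aux R3 y z.
have h2 := dsig_aux (i := 2) (j := 1) ltac:(by rewrite -R3 -mulmxA PP mulmx1) y z.
have h3 := dsig_aux (i := 3) (j := 0) ltac:(by rewrite PP Ah0) y z.
have := Hle3 y z; have := Hle3 y (sig z).
case: (d y z) h0 h1 h2 h3 => [|[|[|[|g]]]] //=;
  case: (d y (sig z)) => [|[|[|[|g']]]] //=.
Qed.


Variable x : 'I_N.

Definition Es i := dual_idem e x i.
Definition M i j h : 'M[algC]_N :=
  \matrix_(y, z) ((d x y == i) && (d x z == j) && (d y z == h))%:R.

Lemma Es_diag i : Es i = diag_mx (\row_y (d x y == i)%:R).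
Proof.
apply/matrixP => y z; rewrite !mxE.
by case: (y =P z) => [->|ne] /=; rewrite ?mulr1n ?mulr0n.
Qed.

Lemma EXE i X j : Es i *m X *m Es j =
  \matrix_(y, z) (((d x y == i) && (d x z == j))%:R * X y z).
Proof.
rewrite !Es_diag mul_diag_mx mul_mx_diag; apply/matrixP => y z; rewrite !mxE.
by rewrite -mulrA [X y z * _]mulrC mulrA -natrM mulnb.
Qed.

Lemma ME i j h : Es i *m Ah h *m Es j = M i j h.
Proof. by rewrite EXE; apply/matrixP => y z; rewrite !mxE -natrM mulnb. Qed.

Lemma EsM i j h : Es i *m M i j h = M i j h.
Proof.
rewrite Es_diag mul_diag_mx; apply/matrixP => y z; rewrite !mxE.
by case: (d x y =P i) => _ /=; rewrite ?mul1r ?mul0r.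
Qed.

Lemma MEs i j h : M i j h *m Es j = M i j h.
Proof.
rewrite Es_diag mul_mx_diag; apply/matrixP => y z; rewrite !mxE.
by case: (d x z =P j) => _ /=; rewrite ?andbF ?andbT ?mulr1 ?mulr0.
Qed.

Lemma EsM0 i i' j h : i != i' -> Es i *m M i' j h = 0.
Proof.
move=> ne; rewrite Es_diag mul_diag_mx; apply/matrixP => y z; rewrite !mxE.
case: (d x y =P i) => [hi|] /=; last by rewrite mul0r.
by rewrite hi (negbTE ne) /= mulr0.
Qed.

Lemma Mmis i j j' l h h' : j != j' -> M i j h *m M j' l h' = 0.
Proof. by move=> ne; rewrite -MEs -mulmxA EsM0 // mulmx0. Qed.

Lemma Mzero i j h : ~~ [&& (i <= j + h)%N, (j <= i + h)%N & (h <= i + j)%N] -> M i j h = 0.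
Proof.
move=> ntri; apply/matrixP => y z; rewrite !mxE.
case: (d x y =P i) => [hi|_]; case: (d x z =P j) => [hj|_];
  case: (d y z =P h) => [hh|_]; rewrite //= ?andbF //.
exfalso; move: ntri; rewrite -hi -hj -hh.
have := d_tri x y z; have := d_tri x z y; have := d_tri y x z.
rewrite (d_sym z y) (d_sym y x) => h1 h2 h3.
by rewrite h1 h2 h3.
Qed.

Lemma Mtr i j h : (M i j h)^T = M j i h.
Proof. by apply/matrixP => y z; rewrite !mxE (d_sym z y) [(_ == i) && _]andbC. Qed.

Lemma Ah_tr h : (Ah h)^T = Ah h.
Proof. by apply/matrixP => y z; rewrite !mxE d_sym. Qed.

Lemma Es_tr i : (Es i)^T = Es i.
Proof. by rewrite Es_diag tr_diag_mx. Qed.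

Lemma eq3B (a j : nat) : (a <= 3 -> j <= 3 -> ((3 - a) == j) = (a == 3 - j))%N.
Proof. move=> ha hj; apply/eqP/eqP; lia. Qed.

Lemma MP i j h : (j <= 3)%N -> (h <= 3)%N -> M i j h *m Ah 3 = M i (3 - j)%N (3 - h)%N.
Proof.
move=> hj hh; rewrite mulP; apply/matrixP => y z; rewrite !mxE !dsig.
by rewrite !eq3B ?Hle3.
Qed.

Lemma PM i j h : (i <= 3)%N -> (h <= 3)%N -> Ah 3 *m M i j h = M (3 - i)%N j (3 - h)%N.
Proof.
move=> hi hh; rewrite Pmul; apply/matrixP => y z; rewrite !mxE (d_sym (sig y)) !dsig.
by rewrite (eq3B (Hle3 x y) hi) (eq3B (Hle3 z y) hh) (d_sym z y).
Qed.


Lemma EE j : Es j *m Es j = Es j.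
Proof.
rewrite {1}Es_diag mul_diag_mx; apply/matrixP => y z; rewrite !mxE.
by case: (d x y =P j) => _ /=; rewrite ?mul1r ?mul0r ?andbF.
Qed.

Lemma sumE : \sum_(j < 4) Es j = 1%:M.
Proof.
apply/matrixP => y z; rewrite summxE.
have hy : (d x y < 4)%N by rewrite ltnS Hle3.
rewrite (bigD1 (Ordinal hy)) //= big1 ?addr0.
  by rewrite !mxE eqxx andbT.
move=> j hj; rewrite !mxE; case: (d x y =P j) => [hj'|]; last by rewrite andbF.
by move: hj; rewrite -val_eqE /= hj' eqxx.
Qed.

Lemma split_mul i l (X Y : 'M[algC]_N) :
  Es i *m (X *m Y) *m Es l = \sum_(j < 4) (Es i *m X *m Es j) *m (Es j *m Y *m Es l).
Proof.
rewrite -{1}(mulmx1 X) -sumE !(mulmx_sumr, mulmx_suml).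
by apply: eq_bigr => j _; rewrite -{1}(EE j) !mulmxA.
Qed.

Lemma Msplit i l h h' :
  \sum_(j < 4) M i j h *m M j l h' = Es i *m (Ah h *m Ah h') *m Es l.
Proof. by rewrite split_mul; apply: eq_bigr => j _; rewrite !ME. Qed.

Definition Mc i j h := if [&& (i <= j + h)%N, (j <= i + h)%N & (h <= i + j)%N] then M i j h else 0.

Lemma M_Mc i j h : M i j h = Mc i j h.
Proof. by rewrite /Mc; case: ifP => // /negbT /Mzero. Qed.

Lemma K1 : M 0 1 1 *m M 1 0 1 = kk *: M 0 0 0.
Proof.
have := Msplit 0 0 1 1; rewrite R1 !mulmxDr !mulmxDl -!scalemxAr -!scalemxAl !ME.
rewrite !big_ord_recr big_ord0 /= !M_Mc /Mc /=.
by rewrite !(mul0mx, mulmx0, scaler0, add0r, addr0).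
Qed.


Ltac simplM := rewrite ?M_Mc /Mc /=; rewrite ?(mul0mx, mulmx0, scaler0, add0r, addr0).

Lemma K2 : M 0 1 1 *m M 1 1 1 = aa *: M 0 1 1.
Proof.
have := Msplit 0 1 1 1; rewrite R1 !mulmxDr !mulmxDl -!scalemxAr -!scalemxAl !ME.
by rewrite !big_ord_recr big_ord0 /=; simplM.
Qed.

Lemma K3 : M 0 1 1 *m M 1 1 2 = bb *: M 0 1 1.
Proof.
have := Msplit 0 1 1 2; rewrite R2 !mulmxDr !mulmxDl -!scalemxAr -!scalemxAl !ME.
by rewrite !big_ord_recr big_ord0 /=; simplM.
Qed.

Lemma K5 : M 1 1 1 *m M 1 0 1 = aa *: M 1 0 1.
Proof. by have := congr1 trmx K2; rewrite trmx_mul !Mtr linearZ /= Mtr. Qed.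

Lemma K6 : M 1 1 2 *m M 1 0 1 = bb *: M 1 0 1.
Proof. by have := congr1 trmx K3; rewrite trmx_mul !Mtr linearZ /= Mtr. Qed.

Lemma K4 : M 1 0 1 *m M 0 1 1 = M 1 1 0 + M 1 1 1 + M 1 1 2.
Proof.
apply/matrixP => y z; rewrite !mxE (bigD1 x) //= big1 ?addr0; last first.
  by move=> w hw; rewrite !mxE !d_eq0 [x == w]eq_sym (negbTE hw) /= !andbF mul0r.
rewrite !mxE d_refl (d_sym y x) /=.
case: (d x y =P 1%N) => hy; case: (d x z =P 1%N) => hz /=; rewrite ?mul0r ?mulr0 ?addr0 //.
have := d_tri y x z; rewrite (d_sym y x) hy hz.
by case: (d y z) => [|[|[|]]] //= _; rewrite ?addr0 ?add0r ?mulr1.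
Qed.

Lemma M110 : M 1 1 0 = Es 1.
Proof.
apply/matrixP => y z; rewrite !mxE (d_eq0 y z).
by case: (y =P z) => [->|] /=; rewrite ?andbF ?andbT ?andbb.
Qed.

Lemma M000 : M 0 0 0 = Es 0.
Proof.
apply/matrixP => y z; rewrite !mxE (d_eq0 y z).
by case: (y =P z) => [->|] /=; rewrite ?andbF ?andbT ?andbb.
Qed.

Lemma DD_eq : M 1 0 1 *m M 0 1 1 + M 1 1 1 *m M 1 1 1 + M 1 1 2 *m M 1 1 2 =
  kk *: M 1 1 0 + aa *: M 1 1 1 + bb *: M 1 1 2.
Proof.
have := Msplit 1 1 1 1; rewrite R1 !mulmxDr !mulmxDl -!scalemxAr -!scalemxAl !ME.
rewrite !big_ord_recr big_ord0 /=.
have -> : M 1 2 1 *m M 2 1 1 = M 1 1 2 *m M 1 1 2.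
  by rewrite -(MP 1 (j:=1) (h:=2)) // -(PM (i:=1) 1 (h:=2)) // -mulmxA (mulmxA (Ah 3)) PP mul1mx.
by simplM.
Qed.


Definition Idx := (bool * 'I_6 * bool)%type.
Definition tt (j : nat) : nat * nat * nat :=
  nth (1, 1, 2)%N [:: (0, 0, 0); (0, 1, 1); (1, 0, 1); (1, 1, 0); (1, 1, 1)]%N j.
Definition u (j : 'I_6) := M (tt j).1.1 (tt j).1.2 (tt j).2.
Definition Pa (a : bool) (X : 'M[algC]_N) := if a then Ah 3 *m X else X.
Definition Pb (X : 'M[algC]_N) (c : bool) := if c then X *m Ah 3 else X.
Definition f (c : Idx) := Pb (Pa c.1.1 (u c.1.2)) c.2.
Definition Bmat : 'M[algC]_(#|{: Idx}|, N * N) :=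
  \matrix_(r < #|{: Idx}|) mxvec (f (enum_val r)).
Definition inV (X : 'M[algC]_N) := (mxvec X <= Bmat)%MS.

Lemma inV_f c : inV (f c).
Proof.
rewrite /inV; have <- : row (enum_rank c) Bmat = mxvec (f c).
  by rewrite rowK enum_rankK.
exact: row_sub.
Qed.

Lemma inV0 : inV 0.
Proof. by rewrite /inV linear0 sub0mx. Qed.

Lemma inVD X Y : inV X -> inV Y -> inV (X + Y).
Proof. by rewrite /inV linearD /=; apply: addmx_sub. Qed.

Lemma inVZ c X : inV X -> inV (c *: X).
Proof. by rewrite /inV linearZ /=; apply: scalemx_sub. Qed.

Lemma inVN X : inV X -> inV (- X).
Proof. by move=> h; rewrite -scaleN1r inVZ. Qed.

Lemma inVB X Y : inV X -> inV Y -> inV (X - Y).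
Proof. by move=> hX hY; rewrite inVD // inVN. Qed.

Lemma inV_sum (r : seq Idx) (F : Idx -> 'M[algC]_N) :
  (forall c, inV (F c)) -> inV (\sum_(c <- r) F c).
Proof.
move=> h; elim: r => [|c r IH]; first by rewrite big_nil inV0.
by rewrite big_cons inVD.
Qed.

Lemma inV_decomp X : inV X ->
  exists a : 'I_#|{: Idx}| -> algC, X = \sum_r a r *: f (enum_val r).
Proof.
case/submxP => D hD; exists (fun r => D 0 r).
rewrite -[X]mxvecK hD mulmx_sum_row linear_sum /=.
by apply: eq_bigr => r _; rewrite rowK linearZ /= mxvecK.
Qed.

Lemma inV_sumI (F : 'I_#|{: Idx}| -> 'M[algC]_N) :
  (forall r, inV (F r)) -> inV (\sum_r F r).
Proof.
move=> h; rewrite /inV linear_sum /=; apply: summx_sub => r _; exact: h.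
Qed.

Lemma inV_mul X Y : inV X -> inV Y -> (forall c c', inV (f c *m f c')) -> inV (X *m Y).
Proof.
move=> /inV_decomp [a ->] /inV_decomp [a' ->] h.
rewrite mulmx_suml; apply: inV_sumI => r; rewrite mulmx_sumr; apply: inV_sumI => r'.
by rewrite -scalemxAl -scalemxAr; apply: inVZ; apply: inVZ; apply: h.
Qed.



Definition inU (X : 'M[algC]_N) := forall a c, inV (Pb (Pa a X) c).

Lemma PaD a X Y : Pa a (X + Y) = Pa a X + Pa a Y.
Proof. by case: a => //=; rewrite mulmxDr. Qed.
Lemma PaZ a s X : Pa a (s *: X) = s *: Pa a X.
Proof. by case: a => //=; rewrite scalemxAr. Qed.
Lemma PbD c X Y : Pb (X + Y) c = Pb X c + Pb Y c.
Proof. by case: c => //=; rewrite mulmxDl. Qed.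
Lemma PbZ c s X : Pb (s *: X) c = s *: Pb X c.
Proof. by case: c => //=; rewrite scalemxAl. Qed.

Lemma inUD X Y : inU X -> inU Y -> inU (X + Y).
Proof. by move=> hX hY a c; rewrite PaD PbD inVD. Qed.
Lemma inUZ s X : inU X -> inU (s *: X).
Proof. by move=> hX a c; rewrite PaZ PbZ inVZ. Qed.
Lemma inUN X : inU X -> inU (- X).
Proof. by move=> h; rewrite -scaleN1r; exact: inUZ. Qed.
Lemma inUB X Y : inU X -> inU Y -> inU (X - Y).
Proof. by move=> hX hY; apply: inUD => //; exact: inUN. Qed.
Lemma inU0 : inU 0.
Proof. by move=> a c; rewrite /Pa /Pb; case: a; case: c; rewrite ?mulmx0 ?mul0mx; exact: inV0. Qed.

Lemma inU_u j : inU (u j).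
Proof. by move=> a c; apply: inV_f (a, j, c). Qed.

Lemma inU000 : inU (M 0 0 0). Proof. exact: (inU_u (@Ordinal 6 0 isT)). Qed.
Lemma inU011 : inU (M 0 1 1). Proof. exact: (inU_u (@Ordinal 6 1 isT)). Qed.
Lemma inU101 : inU (M 1 0 1). Proof. exact: (inU_u (@Ordinal 6 2 isT)). Qed.
Lemma inU110 : inU (M 1 1 0). Proof. exact: (inU_u (@Ordinal 6 3 isT)). Qed.
Lemma inU111 : inU (M 1 1 1). Proof. exact: (inU_u (@Ordinal 6 4 isT)). Qed.
Lemma inU112 : inU (M 1 1 2). Proof. exact: (inU_u (@Ordinal 6 5 isT)). Qed.

Ltac solveU := repeat first [ apply: inUD | apply: inUB | apply: inUZ | apply: inUN
  | exact: inU000 | exact: inU011 | exact: inU101 | exact: inU110 | exact: inU111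
  | exact: inU112 | exact: inU0 | assumption ].

Lemma zid2 (V : zmodType) (p q r : V) : r = p + q + r - p - q.
Proof. by rewrite [p + q + r]addrC !addrA addrAC addrK addrK. Qed.

Lemma zid (V : zmodType) (p q r : V) : p + p = (p + q) - (q + r) + (r + p).
Proof. by rewrite opprD !addrA addrK subrK. Qed.

Section Block.
Let J' := M 1 0 1 *m M 0 1 1.
Let D := M 1 1 1.
Let Nn := M 1 1 2.
Let E1 := M 1 1 0.

Lemma inUJ : inU J'.
Proof. rewrite /J' K4; solveU. Qed.

Lemma JD : J' *m D = aa *: J'.
Proof. by rewrite /J' -mulmxA K2 scalemxAr. Qed.
Lemma DJ : D *m J' = aa *: J'.
Proof. by rewrite /J' mulmxA K5 scalemxAl. Qed.
Lemma NJ : Nn *m J' = bb *: J'.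
Proof. by rewrite /J' mulmxA K6 scalemxAl. Qed.
Lemma Nexp : Nn = J' - E1 - D.
Proof. by rewrite /J' K4 -zid2. Qed.
Lemma E1D : E1 *m D = D.
Proof. by rewrite /E1 M110 EsM. Qed.
Lemma DE1 : D *m E1 = D.
Proof. by rewrite /E1 M110 MEs. Qed.
Lemma NE1 : Nn *m E1 = Nn.
Proof. by rewrite /E1 M110 MEs. Qed.

Lemma e_ND : Nn *m D + D *m D = aa *: J' - D.
Proof. by rewrite {1}Nexp !mulmxBl JD E1D subrK. Qed.
Lemma e_NN : Nn *m Nn + Nn *m D = bb *: J' - Nn.
Proof. by rewrite {2}Nexp !mulmxBr NJ NE1 subrK. Qed.
Lemma e_DN : D *m Nn = aa *: J' - D - D *m D.
Proof. by rewrite Nexp !mulmxBr DJ DE1. Qed.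
Lemma e_sum : D *m D + Nn *m Nn = kk *: E1 + aa *: D + bb *: Nn - J'.
Proof.
apply: (addrI J'); rewrite addrA DD_eq [J' + _]addrC subrK //.
Qed.

Lemma inU_DD : inU (D *m D).
Proof.
have two : (2%:R : algC) != 0 by rewrite pnatr_eq0.
have -> : D *m D = 2%:R^-1 *: (D *m D + D *m D).
  by rewrite -mulr2n -scaler_nat scalerA mulVf // scale1r.
apply: inUZ; rewrite (zid _ (Nn *m Nn) (Nn *m D)) e_sum [Nn *m Nn + _]e_NN.
rewrite [Nn *m D + _]e_ND; move: inUJ; rewrite /D /Nn /E1 => hJ; solveU.
Qed.

Lemma inU_ND : inU (Nn *m D).
Proof.
have -> : Nn *m D = (aa *: J' - D) - D *m D by rewrite -e_ND addrK.
have := inU_DD; have := inUJ; rewrite /D => h1 h2; solveU.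
Qed.

Lemma inU_NN : inU (Nn *m Nn).
Proof.
have -> : Nn *m Nn = (bb *: J' - Nn) - Nn *m D by rewrite -e_NN addrK.
have := inU_ND; have := inUJ; rewrite /Nn => h1 h2; solveU.
Qed.

Lemma inU_DN : inU (D *m Nn).
Proof. rewrite e_DN; have := inU_DD; have := inUJ; rewrite /D => h1 h2; solveU. Qed.
End Block.


Lemma inU_uu j j' : inU (u j *m u j').
Proof.
case: j => [[|[|[|[|[|[|?]]]]]] hj] //; case: j' => [[|[|[|[|[|[|?]]]]]] hj'] //;
rewrite /u /=;
first [ by rewrite Mmis //; exact: inU0
      | by rewrite {1}M000 EsM; solveU
      | by rewrite {1}M110 EsM; solveU
      | by rewrite M000 MEs; solveU
      | by rewrite M110 MEs; solveU
      | by rewrite K1; solveU | by rewrite K2; solveU | by rewrite K3; solveU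
      | by rewrite K4; solveU | by rewrite K5; solveU | by rewrite K6; solveU
      | exact: inU_DD | exact: inU_DN | exact: inU_ND | exact: inU_NN ].
Qed.

Lemma u_shape j : exists i1 j1 h1, [/\ u j = M i1 j1 h1, (i1 <= 1)%N, (j1 <= 1)%N & (h1 <= 3)%N].
Proof.
by case: j => [[|[|[|[|[|[|?]]]]]] hj] //; rewrite /u /=; do 3 eexists; split.
Qed.

Lemma uPu j j' : u j *m Ah 3 *m u j' = 0.
Proof.
have [i1 [j1 [h1 [-> _ hj1 hh1]]]] := u_shape j.
have [i2 [j2 [h2 [-> hi2 _ _]]]] := u_shape j'.
rewrite MP ?(leq_trans hj1) // Mmis //; apply/eqP; lia.
Qed.

Lemma Pu_aux j j' : u j *m (Ah 3 *m u j') = 0.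
Proof. by rewrite mulmxA uPu. Qed.

Lemma ff1 a X Y c2 : Pb (Pa a X) true *m Pb (Pa true Y) c2 = Pb (Pa a (X *m Y)) c2.
Proof.
by case: a; case: c2; rewrite /Pa /Pb ?mulmxA -?(mulmxA _ (Ah 3) (Ah 3)) PP mulmx1.
Qed.
Lemma ff2 a X Y c2 : Pb (Pa a X) false *m Pb (Pa false Y) c2 = Pb (Pa a (X *m Y)) c2.
Proof. by case: a; case: c2; rewrite /Pa /Pb ?mulmxA. Qed.
Lemma ff3 a X Y c2 : X *m Ah 3 *m Y = 0 -> Pb (Pa a X) true *m Pb (Pa false Y) c2 = 0.
Proof.
move=> h; have h' : Ah 3 *m (X *m Ah 3 *m Y) = 0 by rewrite h mulmx0.
rewrite !mulmxA in h h'.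
by case: a; case: c2; rewrite /Pa /Pb ?mulmxA ?h ?h' ?mul0mx.
Qed.
Lemma ff4 a X Y c2 : X *m (Ah 3 *m Y) = 0 -> Pb (Pa a X) false *m Pb (Pa true Y) c2 = 0.
Proof.
move=> h; have h' : Ah 3 *m (X *m (Ah 3 *m Y)) = 0 by rewrite h mulmx0.
rewrite !mulmxA in h h'.
by case: a; case: c2; rewrite /Pa /Pb ?mulmxA ?h ?h' ?mul0mx.
Qed.

Lemma inV_ff c c' : inV (f c *m f c').
Proof.
case: c => [[a j] c1]; case: c' => [[a' j'] c2]; rewrite /f /=.
case: c1; case: a'.
- by rewrite ff1; apply: inU_uu.
- by rewrite ff3 ?uPu //; exact: inV0.
- by rewrite ff4 ?Pu_aux //; exact: inV0.
- by rewrite ff2; apply: inU_uu.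
Qed.



Lemma inU_M i j h : (i <= 1)%N -> (j <= 1)%N -> (h <= 3)%N -> inU (M i j h).
Proof.
case: i => [|[|i]] // _; case: j => [|[|j]] // _; case: h => [|[|[|[|h]]]] // _;
  rewrite M_Mc /Mc /=; solveU.
Qed.

Lemma inV_M i j h : (i <= 3)%N -> (j <= 3)%N -> (h <= 3)%N -> inV (M i j h).
Proof.
move=> hi hj hh.
have hi' : (3 - i <= 3)%N by lia.
have hj' : (3 - j <= 3)%N by lia.
have hh' : (3 - h <= 3)%N by lia.
case: (leqP i 1) => Hi; case: (leqP j 1) => Hj.
- exact: (inU_M Hi Hj hh false false).
- have -> : M i j h = Pb (Pa false (M i (3 - j)%N (3 - h)%N)) true.
    by rewrite /Pa /Pb MP // !subKn.
  apply: inU_M => //; lia.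
- have -> : M i j h = Pb (Pa true (M (3 - i)%N j (3 - h)%N)) false.
    by rewrite /Pa /Pb PM // !subKn.
  apply: inU_M => //; lia.
- have -> : M i j h = Pb (Pa true (M (3 - i)%N (3 - j)%N h)) true.
    by rewrite /Pa /Pb -mulmxA MP // PM // !subKn.
  apply: inU_M => //; lia.
Qed.

Lemma Mii0 i : M i i 0 = Es i.
Proof.
apply/matrixP => y z; rewrite !mxE (d_eq0 y z).
by case: (y =P z) => [->|] /=; rewrite ?andbF ?andbT ?andbb.
Qed.

Lemma inV_E i : (i <= 3)%N -> inV (Es i).
Proof. by move=> hi; rewrite -Mii0 inV_M. Qed.

Lemma inV_1 : inV 1%:M.
Proof.
rewrite -sumE /inV linear_sum /=; apply: summx_sub => i _.
by apply: inV_E; rewrite -ltnS.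
Qed.

Lemma inV_A : inV (adj_mx e).
Proof.
rewrite A1 -(mul1mx (Ah 1)) -(mulmx1 (1%:M *m Ah 1)) -sumE !mulmx_suml.
rewrite /inV linear_sum /=; apply: summx_sub => i _.
rewrite mulmx_sumr linear_sum /=; apply: summx_sub => j _.
rewrite ME; apply: inV_M => //; by rewrite -ltnS.
Qed.


Lemma minW (W : 'A[algC]_N) : (1%:M \in W)%MS ->
  (forall g, g \in terwilliger_gens e x -> (g \in W)%MS) -> (W * W <= W)%MS ->
  (Bmat <= W)%MS.
Proof.
move=> h1 hg hWW.
have mulW A B : (A \in W)%MS -> (B \in W)%MS -> (A *m B \in W)%MS.
  by move=> hA hB; apply: submx_trans (mem_mulsmx hA hB) hWW.
have addW A B : (A \in W)%MS -> (B \in W)%MS -> (A + B \in W)%MS.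
  by move=> hA hB; rewrite linearD /= addmx_sub.
have sclW s A : (A \in W)%MS -> (s *: A \in W)%MS.
  by move=> hA; rewrite linearZ /= scalemx_sub.
have subW A B : (A \in W)%MS -> (B \in W)%MS -> (A - B \in W)%MS.
  by move=> hA hB; apply: (addW) => //; rewrite -scaleN1r sclW.
have hA : (Ah 1 \in W)%MS by rewrite -A1 hg // inE eqxx.
have hE i : (i <= 3)%N -> (Es i \in W)%MS.
  by move=> hi; apply: (hg); case: i hi => [|[|[|[|i]]]] //= _; rewrite !inE eqxx ?orbT.
have hA0 : (Ah 0 \in W)%MS by rewrite Ah0.
have hA2 : (Ah 2 \in W)%MS.
  have e2 : bb *: Ah 2 = Ah 1 *m Ah 1 - kk *: Ah 0 - aa *: Ah 1 by rewrite R1 -zid2.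
  rewrite -(scalerK bb_neq0 (Ah 2)) e2; apply: (sclW); apply: (subW); last exact: (sclW).
  by apply: (subW); [apply: (mulW) | apply: (sclW)].
have hA3 : (Ah 3 \in W)%MS.
  have e3 : kk *: Ah 3 = Ah 1 *m Ah 2 - bb *: Ah 1 - aa *: Ah 2 by rewrite R2 -zid2.
  rewrite -(scalerK kk_neq0 (Ah 3)) e3; apply: (sclW); apply: (subW); last exact: (sclW).
  by apply: (subW); [apply: (mulW) | apply: (sclW)].
have hAh h : (h <= 3)%N -> (Ah h \in W)%MS.
  by case: h => [|[|[|[|h]]]].
apply/row_subP => r; rewrite rowK.
case: (enum_val r) => [[a j] c]; rewrite /f /=.
have [i1 [j1 [h2 [-> hi1 hj1 hh1]]]] := u_shape j.
have hM : (M i1 j1 h2 \in W)%MS.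
  by rewrite -ME; apply: (mulW); [apply: (mulW); [apply: (hE); lia | apply: (hAh)] | apply: (hE); lia].
by case: a; case: c; rewrite /Pa /Pb //; repeat apply: (mulW).
Qed.


Definition cls y z := ((d x y, d x z), d y z).

Lemma u_entry j y z : u j y z = (cls y z == tt j)%:R.
Proof.
rewrite /u mxE /cls; case: (tt j) => [[i1 j1] h1] /=.
by rewrite !xpair_eqE.
Qed.

Lemma tt_inj (j j' : 'I_6) : tt j = tt j' -> j = j'.
Proof.
move=> h; apply: val_inj; move: h.
by case: j => [[|[|[|[|[|[|?]]]]]] hj] //; case: j' => [[|[|[|[|[|[|?]]]]]] hj'].
Qed.

Lemma tt_le (j : 'I_6) : ((tt j).1.1 <= 1)%N && ((tt j).1.2 <= 1)%N.
Proof. by case: j => [[|[|[|[|[|[|?]]]]]] hj]. Qed.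

Lemma L1_ex : exists z, d x z = 1%N.
Proof.
have := deg x; have : (0 < k)%N by lia.
move=> hk hd; rewrite -hd in hk; case/card_gt0P: hk => z; rewrite inE -d1 => /eqP.
by exists z.
Qed.

Lemma wit (j : 'I_6) : exists y z, cls y z == tt j.
Proof.
have [z1 hz1] := L1_ex.
case: j => [[|[|[|[|[|[|?]]]]]] hj] //.
- by exists x, x; rewrite /cls d_refl.
- by exists x, z1; rewrite /cls d_refl hz1.
- by exists z1, x; rewrite /cls d_refl (d_sym z1 x) hz1.
- by exists z1, z1; rewrite /cls d_refl hz1.
- have := cnt_all x z1 1; rewrite hz1 /cntf /bn /cn /=.
  have : (0 < k - 1 - b)%N by lia.
  move=> hp hc; rewrite -hc in hp; case/card_gt0P: hp => z2; rewrite inE => /andP[ez hz2].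
  by exists z1, z2; rewrite /cls hz1 (eqP hz2); move: ez; rewrite -d1 => /eqP ->.
- have := cnt_all x z1 2; rewrite hz1 /cntf /bn /cn /=.
  move=> hc; have hp := b_pos; rewrite -hc in hp; case/card_gt0P: hp => w; rewrite inE => /andP[ew hw].
  exists z1, (sig w); rewrite /cls hz1 !dsig (eqP hw).
  by move: ew; rewrite -d1 => /eqP ->.
Qed.

Definition w0 (j : 'I_6) := odflt (x, x) [pick p : 'I_N * 'I_N | cls p.1 p.2 == tt j].

Lemma w0P j : cls (w0 j).1 (w0 j).2 = tt j.
Proof.
rewrite /w0; case: pickP => [p /eqP //|h].
have [y [z hp]] := wit j; move: (h (y, z)) => /negbT.
by rewrite -[cls (y, z).1 _]/(cls y z) hp.
Qed.

Definition sigp (a : bool) y := if a then sig y else y.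

Lemma Pa_entry a X y z : Pa a X y z = X (sigp a y) z.
Proof. by case: a; rewrite /Pa /sigp // Pmul mxE. Qed.
Lemma Pb_entry c X y z : Pb X c y z = X y (sigp c z).
Proof. by case: c; rewrite /Pb /sigp // mulP mxE. Qed.

Lemma f_entry a j c y z : f (a, j, c) y z = u j (sigp a y) (sigp c z).
Proof. by rewrite /f /= Pb_entry Pa_entry. Qed.

Definition wy (c : Idx) := sigp c.1.1 (w0 c.1.2).1.
Definition wz (c : Idx) := sigp c.2 (w0 c.1.2).2.

Lemma sigpp a a' y : sigp a' (sigp a y) = if a' == a then y else sig y.
Proof. by case: a; case: a'; rewrite /sigp ?sigK. Qed.

Lemma f_wit c c' : f c' (wy c) (wz c) = (c' == c)%:R.
Proof.
case: c => [[a j] c2]; case: c' => [[a' j'] c2'].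
rewrite f_entry /wy /wz /= !sigpp u_entry.
have := w0P j; set p := w0 j => hp.
have /andP[hy hz] := tt_le j; have /andP[hy' hz'] := tt_le j'.
rewrite /cls in hp *.
have hpy : (d x p.1 <= 1)%N by rewrite -[d x p.1]/((d x p.1, d x p.2, d p.1 p.2).1.1) hp.
have hpz : (d x p.2 <= 1)%N by rewrite -[d x p.2]/((d x p.1, d x p.2, d p.1 p.2).1.2) hp.
case: (a' =P a) => [->|na]; last first.
  case: (tt j') hy' hz' => [[t1 t2] t3] hy' hz'; rewrite /= in hy' hz'.
  rewrite !xpair_eqE dsig.
  have -> : ((3 - d x p.1)%N == t1) = false by apply/negbTE/eqP; lia.
  by rewrite (introF eqP na).
case: (c2' =P c2) => [->|nc]; last first.
  case: (tt j') hy' hz' => [[t1 t2] t3] hy' hz'; rewrite /= in hy' hz'.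
  rewrite !xpair_eqE dsig.
  have -> : ((3 - d x p.2)%N == t2) = false by apply/negbTE/eqP; lia.
  by rewrite andbF (introF eqP nc) andbF.
rewrite hp !xpair_eqE !eqxx andbT /=.
have -> : (tt j == tt j') = (j' == j) by apply/idP/idP => /eqP h; apply/eqP; [symmetry; exact: tt_inj | by rewrite h].
by [].
Qed.

Lemma rankB : \rank Bmat = #|{: Idx}|.
Proof.
pose S : 'M[algC]_(N * N, #|{: Idx}|) :=
  \matrix_(p, r) (p == mxvec_index (wy (enum_val r)) (wz (enum_val r)))%:R.
have BS : Bmat *m S = 1%:M.
  apply/matrixP => r r'; rewrite !mxE.
  rewrite (bigD1 (mxvec_index (wy (enum_val r')) (wz (enum_val r')))) //= big1 ?addr0.
    by rewrite !mxE eqxx mulr1 mxvecE f_wit (inj_eq enum_val_inj).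
  by move=> p hp; rewrite !mxE (negbTE hp) mulr0.
apply/eqP; rewrite eqn_leq rank_leq_row /=.
by rewrite -{1}(mxrank1 algC #|{: Idx}|) -BS mxrankM_maxl.
Qed.


Lemma main_thm : exists V : 'A[algC]_N,
    is_generated_subalgebra (terwilliger_gens e x) V /\ \rank V = 24%N.
Proof.
exists (<<Bmat>>%MS); split; last first.
  by rewrite genmxE rankB !card_prod card_bool card_ord.
split.
- by rewrite genmxE; exact: inV_1.
- move=> g; rewrite genmxE /terwilliger_gens !in_cons in_nil orbF.
  case/orP => [/eqP->|]; first exact: inV_A.
  case/orP => [/eqP->|]; first exact: inV_E.
  case/orP => [/eqP->|]; first exact: inV_E.
  case/orP => [/eqP->|]; first exact: inV_E.
  by move/eqP->; exact: inV_E.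
- apply/mulsmx_subP => A B; rewrite !genmxE => hA hB.
  by apply: inV_mul => //; exact: inV_ff.
- by move=> W h1 hg hWW; rewrite genmxE; exact: minW.
Qed.

End Taylor.

Unset Implicit Arguments.

Theorem proposition7p8 (N : nat) (e : rel 'I_N) (hT : is_taylor e) (x : 'I_N) :
  exists V : 'A[algC]_N,
    is_generated_subalgebra (terwilliger_gens e x) V /\ \rank V = 24%N.
Proof.
case: hT => k [b [hkb [[[esym eirr] _ _ Hle3 Hex] [Hc Hb]]]].
exact: (main_thm hkb esym eirr Hle3 Hex Hc Hb x).
Qed.
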